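(* For $n\ge 6$ consider partitions of $n$ with parts $q_1\ge q_2\ge\dots\ge q_h$ such that $h\ge 4$, $q_j-q_{j+1}\in\{0,1\}$ for all $1\le j<h$, $q_1=q_2$, and $q_{h-2}=3$, $q_{h-1}=2$, $q_h=1$. Let $e'(n)$ (resp. $o'(n)$) be the number of such partitions with an even (resp. odd) number $h$ of parts. For an integer $t$ put $P_1(t)=\tfrac12(3t^2+t+4)$, $P_2(t)=\tfrac12(3(t+1)^2-t-1)$, $P_3(t)=\tfrac12(3(t+1)^2-t+3)$, $P_4(t)=\tfrac12(3(t+1)^2+t+1)$. Then for every integer $n\ge 6$: (a) $e'(n)=o'(n)$ if $n\notin\{P_1(t),P_2(t),P_3(t),P_4(t)\}$ for every integer $t\ge 2$; (b) $e'(n)=o'(n)+1$ if $n=P_1(t)$ or $n=P_4(t)$ for some integer $t\ge 2$; (c) $e'(n)=o'(n)-1$ if $n=P_2(t)$ or $n=P_3(t)$ for some integer $t\ge 2$. *)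

(* Defs.v *)
From mathcomp Require Import all_boot.
Set Implicit Arguments. Unset Strict Implicit. Unset Printing Implicit Defensive.

Definition step01 (a b : nat) : bool := (b <= a) && (a <= b.+1).

Definition valid_part (n : nat) (s : seq nat) : bool :=
  [&& 4 <= size s,
      sumn s == n,
      sorted step01 s,
      nth 0 s 0 == nth 0 s 1 &
      drop (size s - 3) s == [:: 3; 2; 1]].

(* Every such partition has h <= n parts, each part in 1..n, so it is
   represented by an h.-tuple of 'I_n.+1 with h < n.+1. *)
Definition num_parts_with (n : nat) (P : nat -> bool) : nat :=
  \sum_(h < n.+1 | P h) #|[pred t : h.-tuple 'I_n.+1 | valid_part n (map val t)]|.

Definition e' (n : nat) : nat := num_parts_with n (fun h => ~~ odd h).
Definition o' (n : nat) : nat := num_parts_with n odd.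

(* the P_i(t) are always integers (numerators even) *)
Definition P1 (t : nat) : nat := (3 * t ^ 2 + t + 4) %/ 2.
Definition P2 (t : nat) : nat := (3 * (t + 1) ^ 2 - t - 1) %/ 2.
Definition P3 (t : nat) : nat := (3 * (t + 1) ^ 2 - t + 3) %/ 2.
Definition P4 (t : nat) : nat := (3 * (t + 1) ^ 2 + t + 1) %/ 2.

(* Main.v *)
Require Import Defs.
From mathcomp Require Import all_boot all_order all_algebra zify ring.
Import GRing.Theory Num.Theory.
Set Implicit Arguments. Unset Strict Implicit. Unset Printing Implicit Defensive.

Local Close Scope ring_scope.

Definition Ublk (m h : nat) : seq (seq nat) :=
  map (fun t : h.-tuple 'I_m.+1 => map val (tval t)) (enum {: h.-tuple 'I_m.+1}).
Definition U (m : nat) : seq (seq nat) := flatten (map (Ublk m) (iota 0 m.+1)).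

Lemma Ublk_size m h s : s \in Ublk m h -> size s = h.
Proof. by case/mapP=> t _ ->; rewrite size_map size_tuple. Qed.

Lemma Ublk_uniq m h : uniq (Ublk m h).
Proof.
rewrite map_inj_uniq ?enum_uniq // => t1 t2 /(inj_map val_inj) E.
by apply: val_inj.
Qed.

Lemma flatten_uniq_size (F : nat -> seq (seq nat)) (r : seq nat) :
  uniq r -> (forall h, uniq (F h)) -> (forall h s, s \in F h -> size s = h) ->
  uniq (flatten (map F r)).
Proof.
move=> ur uF sF; elim: r ur => [//|h r IH] /= /andP[hr ur].
rewrite cat_uniq uF IH // andbT; apply/hasPn => s /flattenP[x /mapP[h' h'r ->]] sx.
apply/negP => sh; move: hr; rewrite -(sF _ _ sh) (sF _ _ sx).
by rewrite h'r.
Qed.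

Lemma U_uniq m : uniq (U m).
Proof.
apply: flatten_uniq_size; [exact: iota_uniq | exact: Ublk_uniq | exact: Ublk_size].
Qed.

Lemma memU m s : (s \in U m) = (size s <= m) && all (fun x => x <= m) s.
Proof.
apply/idP/idP.
  case/flattenP=> b /mapP[h hin ->] /mapP[t _ ->].
  rewrite size_map size_tuple; move: hin; rewrite mem_iota add0n ltnS => /andP[_ ->] /=.
  by apply/allP=> x /mapP[i _ ->]; rewrite -ltnS ltn_ord.
case/andP=> sz al; apply/flattenP; exists (Ublk m (size s)).
  by apply/mapP; exists (size s) => //; rewrite mem_iota add0n ltnS.
apply/mapP; exists (map_tuple (fun x => (inord x : 'I_m.+1)) (in_tuple s)); first by rewrite mem_enum.
rewrite /= -map_comp; elim: s al {sz} => [//|x s IH] /= /andP[xm al].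
by rewrite inordK ?ltnS // -IH.
Qed.

Local Open Scope ring_scope.

Definition SP (m : nat) (P : pred (seq nat)) (f : seq nat -> int) : int :=
  \sum_(s <- U m | P s) f s.

Lemma SP_bij (m m' : nat) (P Q : pred (seq nat)) (f g : seq nat -> int)
  (phi : seq nat -> seq nat) :
  (forall s, P s -> s \in U m) -> (forall t, Q t -> t \in U m') ->
  (forall s1 s2, P s1 -> P s2 -> phi s1 = phi s2 -> s1 = s2) ->
  (forall s, P s -> Q (phi s)) ->
  (forall t, Q t -> exists2 s, P s & phi s = t) ->
  (forall s, P s -> g (phi s) = f s) ->
  SP m P f = SP m' Q g.
Proof.
move=> PU QU inj PQ QP gf; rewrite /SP -big_filter -[RHS]big_filter.
rewrite (eq_big_seq (fun s => g (phi s))); last first.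
  by move=> s; rewrite mem_filter => /andP[Ps _]; rewrite gf.
rewrite -(big_map phi xpredT g); apply: perm_big; apply: uniq_perm.
- rewrite map_inj_in_uniq ?filter_uniq ?U_uniq //.
  by move=> s1 s2; rewrite !mem_filter => /andP[P1 _] /andP[P2 _]; apply: inj.
- by rewrite filter_uniq ?U_uniq.
move=> t; apply/mapP/idP.
  by case=> s; rewrite mem_filter => /andP[Ps _] ->; rewrite mem_filter PQ // QU // PQ.
rewrite mem_filter => /andP[Qt _]; case: (QP t Qt) => s Ps <-.
by exists s => //; rewrite mem_filter Ps PU.
Qed.

Lemma eo_sum n :
  (e' n)%:Z - (o' n)%:Z = \sum_(s <- U n | valid_part n s) (-1) ^+ (size s).
Proof.
set c := fun h : nat => #|[pred t : h.-tuple 'I_n.+1 | valid_part n (map val t)]|.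
have inner h : \sum_(s <- Ublk n h | valid_part n s) (-1) ^+ (size s) = (-1) ^+ h * (c h)%:Z.
  rewrite big_seq_cond (eq_bigr (fun _ => (-1) ^+ h)); last first.
    by move=> s /andP[/Ublk_size ->].
  rewrite -big_seq_cond big_map big_enum_cond /= sumr_const -mulr_natr.
  by rewrite natz.
rewrite /U big_flatten big_map.
rewrite (eq_bigr (fun h => (-1) ^+ h * (c h)%:Z)); last by move=> h _; rewrite inner.
have -> : \sum_(h <- iota 0 n.+1) (-1) ^+ h * (c h)%:Z = \sum_(h < n.+1) (-1) ^+ h * (c h)%:Z.
  by change (iota 0 n.+1) with (index_iota 0 n.+1); rewrite big_mkord.
rewrite (bigID (fun h : 'I_n.+1 => odd h)) /= addrC.
rewrite /e' /o' /num_parts_with !(big_morph Posz PoszD (erefl 0%:Z)).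
congr (_ + _).
  by apply: eq_bigr => h /negbTE oh; rewrite -signr_odd oh mul1r.
rewrite -sumrN; apply: eq_bigr => h oh; rewrite -signr_odd oh mulN1r.
by [].
Qed.


Local Close Scope ring_scope.

Fixpoint wtr (b : nat) (w : seq nat) : nat :=
  if w is x :: w' then b * x + wtr b.+1 w' else 0.
Definition wt b w := 'C(b, 2) + wtr b w.
Definition Cb b w := (w != [::]) && all (fun x => 0 < x) w && (b <= last 0 w).
Definition Cbm b m w := Cb b w && (wt b w == m).
Definition initl (w : seq nat) := rev (behead (rev w)).
Definition lastl (w : seq nat) := head 0 (rev w).
Definition bumph (w : seq nat) := if w is x :: w' then x.+1 :: w' else w.
Definition unbumph (w : seq nat) := if w is x :: w' then x.-1 :: w' else w.
Definition fC w := rcons (initl (initl w)) (lastl (initl w) + lastl w).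
Definition fA w := bumph (fC w).
Definition fB b w := let u := unbumph w in rcons (rcons (initl u) (lastl u - b)) b.
Definition fD w := rcons (rcons (initl w) (lastl w - 2)) 2.

Lemma initl_rcons w y : initl (rcons w y) = w.
Proof. by rewrite /initl rev_rcons /= revK. Qed.
Lemma lastl_rcons w y : lastl (rcons w y) = y.
Proof. by rewrite /lastl rev_rcons. Qed.
Lemma wtr_rcons b w y : wtr b (rcons w y) = wtr b w + (b + size w) * y.
Proof.
elim: w b => [|x w IH] b /=; first lia.
rewrite IH; lia.
Qed.
Lemma fC_rcons w0 x y : fC (rcons (rcons w0 x) y) = rcons w0 (x + y).
Proof. by rewrite /fC !initl_rcons !lastl_rcons. Qed.
Lemma fA_rcons w0 x y : fA (rcons (rcons w0 x) y) = bumph (rcons w0 (x + y)).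
Proof. by rewrite /fA fC_rcons. Qed.
Lemma fD_rcons w0 y : fD (rcons w0 y) = rcons (rcons w0 (y - 2)) 2.
Proof. by rewrite /fD initl_rcons lastl_rcons. Qed.
Lemma fB_nil b h : fB b [:: h] = [:: h.-1 - b; b].
Proof. by []. Qed.
Lemma fB_rcons b h t0 y : fB b (h :: rcons t0 y) = rcons (rcons (h.-1 :: t0) (y - b)) b.
Proof.
by rewrite /fB /= -rcons_cons initl_rcons lastl_rcons.
Qed.

Lemma sumn_pos_size w : all (fun x => 0 < x) w -> size w <= sumn w.
Proof. elim: w => [//|x w IH] /= /andP[x0 /IH]; lia. Qed.
Lemma mem_le_sumn w x : x \in w -> x <= sumn w.
Proof.
elim: w => [//|y w IH]; rewrite inE => /orP[/eqP->|/IH] /=; lia.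
Qed.
Lemma wtr_ge b w : b * sumn w <= wtr b w.
Proof.
elim: w b => [|x w IH] b /=; first by rewrite muln0.
have := IH b.+1; rewrite mulnDr; nia.
Qed.
Lemma last_le_sumn w : w != [::] -> last 0 w <= sumn w.
Proof. by case: w => [//|x w] _; apply: mem_le_sumn; apply: mem_last. Qed.

Lemma Cbm_U b m w : 0 < b -> Cbm b m w -> w \in U m.
Proof.
move=> b0 /andP[/andP[/andP[wn al] _] /eqP wm].
have h1 := wtr_ge b w.
have h2 : sumn w <= m by rewrite -wm /wt; nia.
rewrite memU; apply/andP; split.
  by apply: leq_trans (sumn_pos_size al) h2.
by apply/allP => x /mem_le_sumn xs; apply: leq_trans xs h2.
Qed.

Lemma Cbm_big b m w : m < b -> Cbm b m w = false.
Proof.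
move=> mb; apply/negP => /andP[/andP[/andP[wn al] lb] /eqP wm].
have h1 := wtr_ge b w. have h2 := last_le_sumn wn.
move: wm; rewrite /wt; nia.
Qed.

Local Close Scope ring_scope.
Local Open Scope ring_scope.

Lemma SP_split m (P Q : pred (seq nat)) f :
  SP m P f = SP m (fun w => P w && Q w) f + SP m (fun w => P w && ~~ Q w) f.
Proof. by rewrite /SP (bigID Q). Qed.

Lemma SP_ext m (P Q : pred (seq nat)) f : P =1 Q -> SP m P f = SP m Q f.
Proof. by move=> PQ; rewrite /SP; apply: eq_bigl. Qed.

Lemma SP_single m (P : pred (seq nat)) f x :
  (forall w, P w = (w == x) && P x) -> (P x -> x \in U m) ->
  SP m P f = if P x then f x else 0.
Proof.
move=> Pw xU; case Px: (P x).
  rewrite /SP (eq_bigl (fun w => w == x)); last by move=> w; rewrite Pw Px andbT.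
  by rewrite -big_filter filter_pred1_uniq ?U_uniq ?xU // big_seq1.
rewrite /SP big_pred0 // => w; by rewrite Pw Px andbF.
Qed.

Lemma SP_neg m P (f : seq nat -> int) : SP m P (fun w => - f w) = - SP m P f.
Proof. by rewrite /SP sumrN. Qed.

Definition fb b (w : seq nat) : int := (-1) ^+ (b + sumn w).
Definition E b m := SP m (Cbm b m) (fb b).
Definition bZ (c : bool) : int := (c : nat)%:Z.

Lemma E_big b m : (m < b)%N -> E b m = 0.
Proof. by move=> mb; rewrite /E /SP big_pred0 // => w; rewrite Cbm_big. Qed.

Local Close Scope ring_scope.
Definition Adom b m w := (Cbm b m w && (last 0%N w == b)) && ~~ (size w == 1%N).
Definition Bdom b m w :=
  ((Cbm b m w && ~~ (last 0%N w == b)) && ~~ (head 0%N w == 1%N)) && ~~ (w == [:: b.+1]).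

Lemma A_form b m w : Adom b m w ->
  exists w0 x, [/\ w = rcons (rcons w0 x) b, (0 < x)%N, all (fun y => 0 < y)%N w0 & wt b w = m].
Proof.
case/lastP: w => [|w1 y] //; case/lastP: w1 => [|w0 x].
  by rewrite /Adom /= andbF.
rewrite /Adom /Cbm /Cb !last_rcons !all_rcons => /andP[/andP[/andP[/andP[/andP[_ /andP[y0 /andP[x0 al]]] _] /eqP wm] /eqP yb] _].
by subst y; exists w0, x.
Qed.

Lemma lastl1 y : lastl [:: y] = y. Proof. by []. Qed.

Ltac bsolve := repeat (match goal with |- is_true (_ && _) => apply/andP; split end);
  try (apply/eqP); try lia.

Lemma A_props b m w0 x : (0 < b)%N -> (0 < x)%N -> all (fun y => 0 < y)%N w0 ->
  wt b (rcons (rcons w0 x) b) = m ->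
  [/\ Bdom b m (fA (rcons (rcons w0 x) b)),
      fB b (fA (rcons (rcons w0 x) b)) = rcons (rcons w0 x) b &
      sumn (fA (rcons (rcons w0 x) b)) = (sumn (rcons (rcons w0 x) b)).+1].
Proof.
move=> b0 x0 al; rewrite fA_rcons /wt !wtr_rcons size_rcons !sumn_rcons.
case: w0 al => [|h t] /=.
  move=> _ wm; split.
  - rewrite /Bdom /Cbm /Cb /wt /= -wm; bsolve.
    by move=> [E]; lia.
  - by rewrite /fB /= lastl1; congr [:: _; _]; lia.
  - lia.
case/andP=> h0 al wm; split.
- rewrite /Bdom /Cbm /Cb /wt /= -wm.
  rewrite !last_rcons all_rcons al wtr_rcons /=; bsolve.
  by move=> [_]; case: (t).
- by rewrite -rcons_cons fB_rcons /= addnK.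
- by rewrite sumn_rcons; lia.
Qed.

Lemma B_props b m v : (0 < b)%N -> Bdom b m v ->
  Adom b m (fB b v) /\ fA (fB b v) = v.
Proof.
move=> b0; case: v => [|h t]; first by rewrite /Bdom /Cbm /Cb.
case/lastP: t => [|t0 y].
  rewrite /Bdom /Cbm /Cb /wt /= => /andP[/andP[/andP[/andP[/andP[/andP[h0 _] hb] /eqP wm] hnb] h1] hb1].
  have hb2 : h != b.+1 by apply: contra hb1 => /eqP ->.
  have [d hd] : exists d, h = b + 2 + d by exists (h - (b + 2)); move: hnb hb2 hb; lia.
  subst h; rewrite /fB /= lastl1.
  have -> : (b + 2 + d).-1 - b = d.+1 by lia.
  split; last by rewrite -[ [:: d.+1; b] ]/(rcons (rcons [::] d.+1) b) fA_rcons /=; congr [:: _]; lia.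
  rewrite /Adom /Cbm /Cb /wt /= -wm; bsolve.
rewrite /Bdom /Cbm /Cb /wt /= last_rcons all_rcons wtr_rcons.
move=> /andP[/andP[/andP[/andP[/andP[/and3P[h0 y0 al] yb] /eqP wm] ynb] h1] _].
have [d yd] : exists d, y = b + 1 + d by exists (y - (b + 1)); move: yb ynb; lia.
subst y; rewrite fB_rcons.
have -> : b + 1 + d - b = d.+1 by lia.
split; last first.
  rewrite fA_rcons /=; congr (_ :: _); first lia.
  congr rcons; lia.
rewrite /Adom /Cbm /Cb /wt /= -wm !last_rcons !all_rcons !size_rcons !wtr_rcons al /= size_rcons.
bsolve.
Qed.

Local Open Scope ring_scope.

Lemma last_ne (w : seq nat) x y : w != [::] -> last x w = last y w.
Proof. by case: w. Qed.

Lemma AB_cancel b m : (0 < b)%N -> SP m (Adom b m) (fb b) = - SP m (Bdom b m) (fb b).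
Proof.
move=> b0; rewrite -SP_neg.
apply: (SP_bij (phi := fA)).
- by move=> s /andP[/andP[Cs _] _]; exact: (Cbm_U b0 Cs).
- by move=> s /andP[/andP[/andP[Cs _] _] _]; exact: (Cbm_U b0 Cs).
- move=> s1 s2 /A_form[w1 [x1 [-> x1p a1 m1]]] /A_form[w2 [x2 [-> x2p a2 m2]]] E12.
  have [_ E1 _] := A_props b0 x1p a1 m1.
  have [_ E2 _] := A_props b0 x2p a2 m2.
  by rewrite -E1 -E2 E12.
- by move=> s /A_form[w0 [x [-> xp a mm]]]; have [] := A_props b0 xp a mm.
- by move=> t /(B_props b0) [Ad Et]; exists (fB b t).
- move=> s /A_form[w0 [x [-> xp a mm]]]; rewrite /fb; have [_ _ ->] := A_props b0 xp a mm.
  by rewrite addnS exprS mulN1r opprK.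
Qed.

Lemma E_rec b m : (0 < b)%N ->
  E b m = E b.+1 m + bZ (m == wt b [:: b]) - bZ (m == wt b [:: b.+1]).
Proof.
move=> b0.
have S1 : SP m (fun w => (Cbm b m w && (last 0%N w == b)) && (size w == 1%N)) (fb b)
          = bZ (m == wt b [:: b]).
  rewrite (@SP_single _ _ _ [:: b]); last first.
  - by move=> /andP[/andP[C _] _]; exact: (Cbm_U b0 C).
  - move=> w; apply/idP/idP => [Pw|/andP[/eqP-> //]].
    suff wb : w = [:: b] by rewrite wb eqxx -wb Pw.
    case: w Pw => [|y [|z t]] //=; first by case/andP=> /andP[_ /eqP->].
    by rewrite andbF.
  have -> : Cbm b m [:: b] = (wt b [:: b] == m) by rewrite /Cbm /Cb /= b0 leqnn.
  rewrite /= eqxx !andbT eq_sym.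
  case: (m == wt b [:: b]) => //.
  by rewrite /fb /= addn0 addnn -signr_odd odd_double.
have S2 : SP m (fun w => (((Cbm b m w && ~~ (last 0%N w == b)) && ~~ (head 0%N w == 1%N)))
                    && (w == [:: b.+1])) (fb b)
          = - bZ (m == wt b [:: b.+1]).
  rewrite (@SP_single _ _ _ [:: b.+1]); last first.
  - by move=> /andP[/andP[/andP[C _] _] _]; exact: (Cbm_U b0 C).
  - move=> w; apply/idP/idP => [Pw|/andP[/eqP-> //]].
    have wb : w = [:: b.+1] by case/andP: Pw => _ /eqP.
    by move: Pw; rewrite wb eqxx /= !andbT.
  rewrite /Cbm /Cb /= eqxx leqnSn /= eq_sym.
  have -> : (b.+1 == b) = false by apply/negbTE; rewrite eq_sym neq_ltn ltnSn.
  have -> : (b.+1 == 1%N) = false by rewrite eqSS; apply/negbTE; rewrite -lt0n.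
  case: (m == wt b [:: b.+1]) => /=; last by rewrite oppr0.
  by rewrite /fb /= addn0 addnS exprS addnn -signr_odd odd_double mulr1.
have S3 : SP m (fun w => (Cbm b m w && ~~ (last 0%N w == b)) && (head 0%N w == 1%N)) (fb b)
          = E b.+1 m.
  symmetry; apply: (SP_bij (phi := cons 1%N)).
  - by move=> s C; exact: (Cbm_U (ltn0Sn b) C).
  - by move=> s /andP[/andP[C _] _]; exact: (Cbm_U b0 C).
  - by move=> s1 s2 _ _ [].
  - move=> s /andP[/andP[/andP[sn al] lb] /eqP wm].
    rewrite -wm /Cbm /Cb /= al (last_ne 1 0 sn) /wt /= (ltnW lb) binS bin1 muln1 addnA eqxx /= andbT.
    by rewrite eq_sym neq_ltn lb.
  - case=> [|h t] /andP[/andP[/andP[/andP[/andP[_ al] lb] /eqP wm] lnb] /eqP /= h1] //.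
    subst h; exists t => //.
    have tn : t != [::].
      apply/negP => /eqP tn; subst t; move: lb lnb => /= lb1 /negP[].
      by rewrite eqn_leq b0 lb1.
    move: al lb lnb wm; rewrite /= (last_ne 1 0 tn) /Cbm /Cb /wt tn => /= -> lb lnb wm.
    rewrite /= -wm binS bin1 muln1 addnA eqxx andbT /=.
    by rewrite ltn_neqAle eq_sym lnb lb.
  - by move=> s _; rewrite /fb /= addnA addn1.
rewrite /E (SP_split _ _ (fun w => last 0%N w == b)).
rewrite (SP_split _ (fun w => Cbm b m w && (last 0%N w == b)) (fun w => size w == 1%N)).
rewrite (SP_split _ (fun w => Cbm b m w && ~~ (last 0%N w == b)) (fun w => head 0%N w == 1%N)).
rewrite (SP_split _ (fun w => (Cbm b m w && ~~ (last 0%N w == b)) && ~~ (head 0%N w == 1%N))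
           (fun w => w == [:: b.+1])).
rewrite S1 S2 S3.
have -> : SP m (fun w => (Cbm b m w && (last 0%N w == b)) && ~~ (size w == 1%N)) (fb b)
          = - SP m (Bdom b m) (fb b) by apply: AB_cancel.
rewrite /Bdom.
set X := SP m _ (fb b).
rewrite -/(E b.+1 m); ring.
Qed.

Local Close Scope ring_scope.
Local Open Scope ring_scope.

Definition pA k := wt k [:: k].
Definition pB k := wt k [:: k.+1].

Lemma E_closed_aux m d b : (0 < b)%N -> (b + d = m.+1)%N ->
  E b m = \sum_(b <= k < m.+1) (bZ (m == pA k) - bZ (m == pB k)).
Proof.
elim: d b => [|d IH] b b0 hb.
  rewrite E_big ?big_geq //; lia.
rewrite big_ltn; last lia.
rewrite E_rec // (IH b.+1) //; last lia.
rewrite /pA /pB; ring.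
Qed.

Lemma E_closed b m : (0 < b)%N -> (b <= m.+1)%N ->
  E b m = \sum_(b <= k < m.+1) (bZ (m == pA k) - bZ (m == pB k)).
Proof. move=> b0 bm; apply: (E_closed_aux (d := (m.+1 - b)%N)) => //; lia. Qed.

Lemma W_U b m w : (0 < b)%N -> all (fun x => 0 < x)%N w -> wt b w = m -> w \in U m.
Proof.
move=> b0 al wm.
have h1 := wtr_ge b w.
have h2 : (sumn w <= m)%N by rewrite -wm /wt; nia.
rewrite memU; apply/andP; split.
  by apply: leq_trans (sumn_pos_size al) h2.
by apply/allP => x /mem_le_sumn xs; apply: leq_trans xs h2.
Qed.

Definition W3 n w := [&& w != [::], all (fun x => 0 < x)%N w, (2 <= last 0%N w)%N & wt 3 w == n].
Definition sg (w : seq nat) : int := (-1) ^+ (sumn w).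

Local Close Scope ring_scope.

Lemma C_form n w : (W3 n w && (last 0 w == 2)) && ~~ (size w == 1) ->
  exists w0 x, [/\ w = rcons (rcons w0 x) 2, 0 < x, all (fun y => 0 < y) w0 & wt 3 w = n].
Proof.
case/lastP: w => [|w1 y] //; case/lastP: w1 => [|w0 x].
  by rewrite /= andbF.
rewrite /W3 !last_rcons !all_rcons => /andP[/andP[/and4P[_ /andP[y0 /andP[x0 al]] _ /eqP wm] /eqP y2] _].
by subst y; exists w0, x.
Qed.

Lemma C_props n w0 x : 0 < x -> all (fun y => 0 < y) w0 ->
  wt 3 (rcons (rcons w0 x) 2) = n ->
  [/\ Cbm 3 (n - 2) (fC (rcons (rcons w0 x) 2)),
      fD (fC (rcons (rcons w0 x) 2)) = rcons (rcons w0 x) 2 &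
      sumn (fC (rcons (rcons w0 x) 2)) = sumn (rcons (rcons w0 x) 2)].
Proof.
move=> x0 al; rewrite fC_rcons /wt !wtr_rcons size_rcons => wm.
split.
- rewrite /Cbm /Cb /wt last_rcons all_rcons al wtr_rcons.
  have -> : rcons w0 (x + 2) != [::] by case: (w0).
  bsolve.
- by rewrite fD_rcons addnK.
- by rewrite !sumn_rcons addnA.
Qed.

Lemma D_props n v : 2 <= n -> Cbm 3 (n - 2) v ->
  ((W3 n (fD v) && (last 0 (fD v) == 2)) && ~~ (size (fD v) == 1)) /\ fC (fD v) = v.
Proof.
move=> n2; case/lastP: v => [|v0 y]; first by rewrite /Cbm /Cb.
rewrite /Cbm /Cb /wt last_rcons all_rcons wtr_rcons fD_rcons.
move=> /andP[/andP[/andP[_ /andP[y0 al]] y3] /eqP wm].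
split; last by rewrite fC_rcons subnK //; lia.
rewrite /W3 !last_rcons !all_rcons al !size_rcons /wt !wtr_rcons size_rcons.
have -> : rcons (rcons v0 (y - 2)) 2 != [::] by case: (v0).
bsolve.
Qed.

Local Open Scope ring_scope.

Lemma e3 : (-1) ^+ 3 = -1 :> int. Proof. by []. Qed.

Lemma D_split n : (2 <= n)%N ->
  SP n (W3 n) sg = - E 3 n - E 3 (n - 2) + bZ (n == 9%N).
Proof.
move=> n2.
rewrite (SP_split _ _ (fun w => last 0%N w == 2%N)).
rewrite (SP_split _ (fun w => W3 n w && (last 0%N w == 2%N)) (fun w => size w == 1%N)).
have S1 : SP n (fun w => (W3 n w && (last 0%N w == 2%N)) && (size w == 1%N)) sg = bZ (n == 9%N).
  rewrite (@SP_single _ _ _ [:: 2%N]); last first.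
  - by move=> /andP[/andP[/and4P[_ al _ /eqP wm] _] _]; apply: (W_U (b := 3)).
  - move=> w; apply/idP/idP => [Pw|/andP[/eqP-> //]].
    suff wb : w = [:: 2%N] by rewrite wb eqxx -wb Pw.
    case: w Pw => [|y [|z t]] //=; first by case/andP=> /andP[_ /eqP->].
    by rewrite andbF.
  by rewrite /W3 /= eq_sym; case: (n == 9%N).
have S2 : SP n (fun w => W3 n w && ~~ (last 0%N w == 2%N)) sg = - E 3 n.
  rewrite /E -SP_neg; apply: (SP_bij (phi := id)).
  - by move=> s /andP[/and4P[_ al _ /eqP wm] _]; apply: (W_U (b := 3)).
  - by move=> s C; apply: (Cbm_U (b := 3)).
  - by [].
  - move=> s /andP[/and4P[sn al l2 wm] l2'].
    by rewrite /Cbm /Cb sn al wm /= ltn_neqAle eq_sym l2' l2.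
  - move=> t /andP[/andP[/andP[sn al] l3] wm]; exists t => //.
    rewrite /W3 sn al wm (leq_trans _ l3) //=.
    by rewrite neq_ltn l3 orbT.
  - by move=> s _; rewrite /fb /sg exprD e3 mulN1r opprK.
have S3 : SP n (fun w => (W3 n w && (last 0%N w == 2%N)) && ~~ (size w == 1%N)) sg = - E 3 (n - 2).
  rewrite /E -SP_neg; apply: (SP_bij (phi := fC)).
  - by move=> s /andP[/andP[/and4P[_ al _ /eqP wm] _] _]; apply: (W_U (b := 3)).
  - by move=> s C; apply: (Cbm_U (b := 3)).
  - move=> s1 s2 /C_form[w1 [x1 [-> x1p a1 m1]]] /C_form[w2 [x2 [-> x2p a2 m2]]] E12.
    have [_ E1 _] := C_props x1p a1 m1.
    have [_ E2 _] := C_props x2p a2 m2.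
    by rewrite -E1 -E2 E12.
  - by move=> s /C_form[w0 [x [-> xp a mm]]]; have [] := C_props xp a mm.
  - by move=> t /(D_props n2) [Ad Et]; exists (fD t).
  - move=> s /C_form[w0 [x [-> xp a mm]]]; rewrite /fb /sg; have [_ _ ->] := C_props xp a mm.
    by rewrite exprD e3 mulN1r opprK.
rewrite S1 S2 S3; ring.
Qed.

Local Close Scope ring_scope.

Fixpoint dsc (b : nat) (w : seq nat) : seq nat :=
  if w is x :: w' then dsc b.+1 w' ++ nseq x b else [::].
Definition enc w := dsc 3 w ++ [:: 2; 1].

Lemma size_dsc b w : size (dsc b w) = sumn w.
Proof. by elim: w b => [|x w IH] b //=; rewrite size_cat IH size_nseq addnC. Qed.

Lemma sumn_dsc b w : sumn (dsc b w) = wtr b w.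
Proof. by elim: w b => [|x w IH] b //=; rewrite sumn_cat IH sumn_nseq addnC mulnC. Qed.

Lemma dsc_rcons b w x : dsc b (rcons w x) = nseq x (b + size w) ++ dsc b w.
Proof.
elim: w b => [|y w IH] b /=; first by rewrite addn0 cats0.
by rewrite IH -catA addSnnS.
Qed.

Lemma mem_dsc b w y : y \in dsc b w -> b <= y.
Proof.
elim: w b => [|x w IH] b //=; rewrite mem_cat => /orP[/IH|/nseqP[-> _]] //.
exact: ltnW.
Qed.

Lemma nseqS_cat n (a : nat) t : nseq n.+1 a ++ t = nseq n a ++ a :: t.
Proof. by rewrite -cat1s catA -[ [:: a] ]/(nseq 1 a) -nseqD addn1. Qed.

Lemma dsc_inj b w1 w2 : all (fun x => 0 < x) w1 -> all (fun x => 0 < x) w2 ->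
  dsc b w1 = dsc b w2 -> w1 = w2.
Proof.
elim: w1 b w2 => [|x u IH] b [|y v] //=.
- move=> _ /andP[y0 _] /(congr1 size); rewrite size_cat size_nseq /=; lia.
- move=> /andP[x0 _] _ /(congr1 size); rewrite size_cat size_nseq /=; lia.
move=> /andP[x0 au] /andP[y0 av] E.
have cnt z (s : seq nat) : all (fun t => b < t) s -> count_mem b (s ++ nseq z b) = z.
  move=> al; rewrite count_cat count_nseq /= eqxx mul1n.
  have /count_memPn -> // : b \notin s by apply/negP => /(allP al); rewrite ltnn.
have dall s : all (fun t => b < t) (dsc b.+1 s) by apply/allP => t /mem_dsc.
have xy : x = y by rewrite -(cnt x _ (dall u)) -(cnt y _ (dall v)) E.
subst y; congr (_ :: _); apply: (IH b.+1) => //.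
have sz : size (dsc b.+1 u) = size (dsc b.+1 v).
  by move/(congr1 size): E; rewrite !size_cat; lia.
by apply/eqP; move/eqP: E; rewrite eqseq_cat // => /andP[].
Qed.

Lemma path_nseq b n tl : 0 < b -> path step01 b.-1 tl -> path step01 b (nseq n b ++ b.-1 :: tl).
Proof.
move=> b0 ptl; elim: n => [|n IH] /=.
  by rewrite ptl andbT /step01; apply/andP; split; lia.
by rewrite IH andbT /step01 leqnn leqnSn.
Qed.

Lemma dsc_path b w tl : 0 < b -> all (fun x => 0 < x) w -> path step01 b.-1 tl ->
  path step01 (b + size w) (dsc b w ++ b.-1 :: tl).
Proof.
elim: w b tl => [|x w IH] b tl b0 /=.
  by move=> _ ptl; rewrite addn0 ptl andbT /step01; apply/andP; split; lia.
case: x => [//|x] /andP[_ al] ptl.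
rewrite -catA -addSnnS; apply: (IH b.+1 (nseq x b ++ b.-1 :: tl)) => //.
exact: path_nseq.
Qed.

Lemma decode s a : path step01 a s ->
  exists w, [/\ w != [::], all (fun x => 0 < x) w, a :: s = dsc (last a s) w &
                a = last a s + size w - 1].
Proof.
elim: s a => [|c s IH] a /=.
  by move=> _; exists [:: 1]; split => //=; lia.
case/andP=> /andP[ca ac] /IH [w' [wn al E sc]].
move: E sc; set B := last c s => E sc.
case: (ltngtP a c) => [|ac'|ac']; first by lia.
- have -> : a = c.+1 by lia.
  exists (rcons w' 1); split.
  + by case: (w').
  + by rewrite all_rcons al.
  + rewrite dsc_rcons /= -E; congr (_ :: _); case: (w') wn sc => //= ? ? _; lia.
  + rewrite size_rcons; case: (w') wn sc => //= ? ? _; lia.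
- subst a; case/lastP: w' wn al E sc => [//|w1 y] _; rewrite all_rcons => /andP[y0 al1] E sc.
  exists (rcons w1 y.+1); split.
  + by case: (w1).
  + by rewrite all_rcons al1.
  + move: E; rewrite !dsc_rcons /= => ->; congr (_ :: _).
    by rewrite size_rcons addnS subn1 /= in sc.
  + by move: sc; rewrite !size_rcons.
Qed.

Lemma size_enc w : size (enc w) = (sumn w).+2.
Proof. by rewrite /enc size_cat size_dsc addn2. Qed.

Lemma enc_valid n w : W3 n w -> valid_part n (enc w).
Proof.
case/and4P=> wn al l2 /eqP wm.
have hs := last_le_sumn wn.
apply/and5P; split.
- by rewrite size_enc; lia.
- by rewrite /enc sumn_cat sumn_dsc -wm /wt /= addnC.
- have := dsc_path (tl := [:: 1]) (ltn0Sn 2) al.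
  by rewrite /enc => /(_ isT) /path_sorted.
- case/lastP: w wn al l2 {wm hs} => [//|w0 y] _ _; rewrite last_rcons /enc dsc_rcons.
  by case: y => [|[|y]].
- case: w wn al {wm hs l2} => [//|x w'] _ /andP[x0 _].
  rewrite /enc /= -catA; case: x x0 => [//|x] _.
  rewrite nseqS_cat catA size_cat /= addnK.
  by rewrite drop_size_cat.
Qed.

Lemma valid_dec n s : valid_part n s -> exists2 w, W3 n w & enc w = s.
Proof.
case/and5P=> sz /eqP sm st e01 /eqP dr.
set A := take (size s - 3) s.
have sE : s = rcons A 3 ++ [:: 2; 1] by rewrite cat_rcons /A -dr cat_take_drop.
have [a [s0' s0E]] : exists a s0', rcons A 3 = a :: s0' by case: (A) => [|a t]; [exists 3, [::] | exists a, (rcons t 3)].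
have p0 : path step01 a s0'.
  by move: st; rewrite sE s0E /= cat_path => /andP[].
have l3 : last a s0' = 3 by rewrite -[last a s0']/(last 0 (a :: s0')) -s0E last_rcons.
case: (decode p0) => w [wn al dE _]; rewrite l3 in dE.
have encE : enc w = s by rewrite sE s0E dE.
exists w => //.
apply/and4P; split => //.
- case/lastP: w wn al dE encE => [//|w0 y] _; rewrite all_rcons last_rcons => /andP[y0 al0] dE encE.
  case: y y0 dE encE => [//|[|y]] // _ dE encE.
  exfalso; move: e01 sz; rewrite -encE /enc dsc_rcons.
  case/lastP: w0 al0 {dE encE} => [|w1 z] /=; first by [].
  rewrite all_rcons => /andP[z0 _]; rewrite dsc_rcons size_rcons.
  by case: z z0 => [//|z] _ /= /eqP; lia.
- by rewrite /wt -sumn_dsc -sm -encE /enc sumn_cat /= addnC.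
Qed.

Lemma enc_inj w1 w2 : all (fun x => 0 < x) w1 -> all (fun x => 0 < x) w2 ->
  enc w1 = enc w2 -> w1 = w2.
Proof.
move=> a1 a2 E; apply: (dsc_inj (b := 3)) => //.
have sz : size (dsc 3 w1) = size (dsc 3 w2).
  by move/(congr1 size): E; rewrite /enc !size_cat; lia.
by apply/eqP; move/eqP: E; rewrite /enc eqseq_cat // => /andP[].
Qed.

Local Open Scope ring_scope.

Lemma V_W n : \sum_(s <- U n | valid_part n s) (-1) ^+ (size s) = SP n (W3 n) sg.
Proof.
symmetry; apply: (SP_bij (phi := enc)).
- by move=> s /and4P[_ al _ /eqP wm]; apply: (W_U (b := 3)).
- move=> t /valid_dec [w /and4P[_ al _ /eqP wm] <-].
  have c32 : 'C(3, 2) = 3%N by [].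
  rewrite memU; apply/andP; split.
    have := wtr_ge 3 w; rewrite size_enc /wt c32 in wm *; lia.
  apply/allP => x xs; have := mem_le_sumn xs.
  have := wtr_ge 3 w; rewrite /enc sumn_cat sumn_dsc /wt c32 /= in wm *; lia.
- by move=> s1 s2 /and4P[_ a1 _ _] /and4P[_ a2 _ _]; apply: enc_inj.
- by move=> s; apply: enc_valid.
- by move=> t /valid_dec.
- by move=> s _; rewrite size_enc /sg !exprS mulrA mulrNN !mul1r.
Qed.

Local Close Scope ring_scope.

Lemma bin2_eq k : 2 * 'C(k, 2) + k = k * k.
Proof.
elim: k => [//|k IH]; rewrite binS bin1; lia.
Qed.

Lemma pA2 k : 2 * pA k + k = 3 * k * k.
Proof. have := bin2_eq k; rewrite /pA /wt /=; lia. Qed.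
Lemma pB2 k : 2 * pB k = 3 * k * k + k.
Proof. have := bin2_eq k; rewrite /pB /wt /=; lia. Qed.

Ltac pent k j := have := pA2 k; have := pA2 j; have := pB2 k; have := pB2 j;
  case: (ltngtP k j) => [?|?|?]; [|subst|]; nia.

Lemma pA_inj k j : pA k = pA j -> k = j.
Proof. move=> E; pent k j. Qed.
Lemma pB_inj k j : pB k = pB j -> k = j.
Proof. move=> E; pent k j. Qed.
Lemma dAB k j : 1 <= k -> pA k <> pB j.
Proof. move=> k1 E; pent k j. Qed.
Lemma dA2A k j : 3 <= k -> 3 <= j -> pA k + 2 <> pA j.
Proof. move=> k3 j3 E; pent k j. Qed.
Lemma dA2B k j : 3 <= k -> 3 <= j -> pA k + 2 <> pB j.
Proof. move=> k3 j3 E; pent k j. Qed.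
Lemma dB2A k j : 2 <= k -> 3 <= j -> pB k + 2 <> pA j.
Proof. move=> k3 j3 E; pent k j. Qed.
Lemma dB2B k j : 2 <= k -> 3 <= j -> pB k + 2 <> pB j.
Proof. move=> k3 j3 E; pent k j. Qed.
Lemma pA_ge k : k <= pA k.
Proof. have := pA2 k; nia. Qed.
Lemma pB_ge k : k <= pB k.
Proof. have := pB2 k; nia. Qed.
Lemma pA_ge12 k : 3 <= k -> 12 <= pA k.
Proof. have := pA2 k; nia. Qed.
Lemma pB_ge15 k : 3 <= k -> 15 <= pB k.
Proof. have := pB2 k; nia. Qed.

Lemma e2 x : x ^ 2 = x * x. Proof. by rewrite expnS expn1. Qed.

Lemma P1E t : P1 t = pB t + 2.
Proof.
rewrite /P1 e2; have := pB2 t => h.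
have -> : 3 * (t * t) + t + 4 = 2 * (pB t + 2) by lia.
by rewrite mulKn.
Qed.
Lemma P2E t : P2 t = pA t.+1.
Proof.
rewrite /P2 e2; have := pA2 t.+1 => h.
have -> : 3 * ((t + 1) * (t + 1)) - t - 1 = 2 * pA t.+1 by nia.
by rewrite mulKn.
Qed.
Lemma P3E t : P3 t = pA t.+1 + 2.
Proof.
rewrite /P3 e2; have := pA2 t.+1 => h.
have -> : 3 * ((t + 1) * (t + 1)) - t + 3 = 2 * (pA t.+1 + 2) by nia.
by rewrite mulKn.
Qed.
Lemma P4E t : P4 t = pB t.+1.
Proof.
rewrite /P4 e2; have := pB2 t.+1 => h.
have -> : 3 * ((t + 1) * (t + 1)) + t + 1 = 2 * pB t.+1 by nia.
by rewrite mulKn.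
Qed.

Local Open Scope ring_scope.

Definition Fs m := \sum_(3 <= k < m.+1) (bZ (m == pA k) - bZ (m == pB k)).

Lemma sum0 (f : nat -> nat) lo m :
  (forall k, (lo <= k)%N -> m <> f k) -> \sum_(lo <= k < m.+1) bZ (m == f k) = 0.
Proof.
move=> H; rewrite big_nat big1 // => k /andP[lok _].
by case: eqP => // /H; rewrite lok => /(_ isT).
Qed.

Lemma sum1 (f : nat -> nat) lo m k0 : (lo <= k0)%N -> (k0 <= m)%N -> m = f k0 ->
  (forall k, f k = f k0 -> k = k0) -> \sum_(lo <= k < m.+1) bZ (m == f k) = 1.
Proof.
move=> l0 k0m mE inj.
rewrite (bigD1_seq k0) ?iota_uniq ?mem_index_iota ?l0 ?ltnS //= -mE eqxx.
rewrite big1 ?addr0 // => k kk0.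
by case: eqP => // /esym; rewrite mE => /inj E; move: kk0; rewrite E eqxx.
Qed.

Lemma F_zero m : (forall k, (3 <= k)%N -> m <> pA k /\ m <> pB k) -> Fs m = 0.
Proof.
move=> H; rewrite /Fs sumrB !sum0 ?subr0 // => k /H []//.
Qed.

Lemma F_A m k0 : (3 <= k0)%N -> m = pA k0 -> Fs m = 1.
Proof.
move=> k3 mE; rewrite /Fs sumrB (sum0 (f := pB)); last first.
  by move=> k _; rewrite mE; apply: dAB; lia.
rewrite subr0 (@sum1 _ _ _ k0) //; first by rewrite mE pA_ge.
by move=> k /pA_inj.
Qed.

Lemma F_B m k0 : (3 <= k0)%N -> m = pB k0 -> Fs m = -1.
Proof.
move=> k3 mE; rewrite /Fs sumrB (sum0 (f := pA)); last first.
  by move=> k k3'; rewrite mE => /esym; apply: dAB; lia.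
rewrite sub0r (@sum1 _ _ _ k0) //; first by rewrite mE pB_ge.
by move=> k /pB_inj.
Qed.

Local Close Scope ring_scope.

Lemma key n : 6 <= n ->
  ((e' n)%:Z - (o' n)%:Z = - Fs n - Fs (n - 2) + bZ (n == 9))%R.
Proof.
move=> n6; rewrite eo_sum V_W D_split; last lia.
by rewrite !E_closed //; lia.
Qed.

Theorem corollary4p9 (n : nat) (hn : 6 <= n) :
  ((forall t : nat, 2 <= t ->
      n <> P1 t /\ n <> P2 t /\ n <> P3 t /\ n <> P4 t) ->
     e' n = o' n)
  /\ ((exists2 t : nat, 2 <= t & n = P1 t \/ n = P4 t) -> e' n = (o' n).+1)
  /\ ((exists2 t : nat, 2 <= t & n = P2 t \/ n = P3 t) -> (e' n).+1 = o' n).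
Proof.
have K := key hn.
split; [|split].
- move=> H.
  have H9 : (n == 9) = false.
    by apply/eqP => n9; have [] := H 2 (leqnn 2); rewrite P1E.
  rewrite F_zero in K; last first.
    move=> k k3; have [h1 [h2 [h3 h4]]] := H k.-1 ltac:(lia).
    rewrite P2E P4E prednK in h2 h4; last lia. by [].
  rewrite F_zero in K; last first.
    move=> k k3; have [h1 [h2 [h3 h4]]] := H k.-1 ltac:(lia).
    have [h1' _] := H k ltac:(lia).
    rewrite P3E prednK in h3; last lia.
    rewrite P1E in h1'.
    by split => E; [apply: h3 | apply: h1']; rewrite -E; lia.
  move: K; rewrite H9 /bZ /=; lia.
- case=> t t2 [] nE; subst n.
  + rewrite P1E in K *.
    case: (ltngtP t 2) => [|t3|t2']; first lia.
    * rewrite (@F_zero (pB t + 2)) in K; last first.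
        by move=> k k3; split; [apply: dB2A | apply: dB2B]; lia.
      rewrite (@F_B (pB t + 2 - 2) t) in K; [|lia|lia].
      have H9 : (pB t + 2 == 9) = false.
        by apply/eqP; have := pB_ge15 t3; lia.
      move: K; rewrite H9 /bZ /=; lia.
    * subst t; have E9 : pB 2 + 2 = 9 by [].
      rewrite E9 in K *.
      rewrite (@F_zero 9) in K; last first.
        by move=> k k3; have := pA_ge12 k3; have := pB_ge15 k3; lia.
      rewrite (@F_zero (9 - 2)) in K; last first.
        by move=> k k3; have := pA_ge12 k3; have := pB_ge15 k3; lia.
      by move: K; rewrite /bZ /=; lia.
  + rewrite P4E in K *.
    rewrite (@F_B (pB t.+1) t.+1) in K; [|lia|lia].
    rewrite (@F_zero (pB t.+1 - 2)) in K; last first.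
      move=> k k3; have := pB_ge15 (ltac:(lia) : 3 <= t.+1) => hb.
      split=> E; [apply: (@dA2B k t.+1) | apply: (@dB2B k t.+1)]; lia.
    have H9 : (pB t.+1 == 9) = false.
      by apply/eqP; have := pB_ge15 (ltac:(lia) : 3 <= t.+1); lia.
    move: K; rewrite H9 /bZ /=; lia.
- case=> t t2 [] nE; subst n.
  + rewrite P2E in K *.
    rewrite (@F_A (pA t.+1) t.+1) in K; [|lia|lia].
    rewrite (@F_zero (pA t.+1 - 2)) in K; last first.
      move=> k k3; have := pA_ge12 (ltac:(lia) : 3 <= t.+1) => hb.
      split=> E; [apply: (@dA2A k t.+1) | apply: (@dB2A k t.+1)]; lia.
    have H9 : (pA t.+1 == 9) = false.
      by apply/eqP; have := pA_ge12 (ltac:(lia) : 3 <= t.+1); lia.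
    move: K; rewrite H9 /bZ /=; lia.
  + rewrite P3E in K *.
    rewrite (@F_zero (pA t.+1 + 2)) in K; last first.
      by move=> k k3; split; [apply: dA2A | apply: dA2B]; lia.
    rewrite (@F_A (pA t.+1 + 2 - 2) t.+1) in K; [|lia|lia].
    have H9 : (pA t.+1 + 2 == 9) = false.
      by apply/eqP; have := pA_ge12 (ltac:(lia) : 3 <= t.+1); lia.
    move: K; rewrite H9 /bZ /=; lia.
Qed.
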